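(* Let $D\mathcal{M}$ be an $\ell c$DCB system, linearly conjugate via $Q=\mathrm{diag}(q_1,\dots,q_n)$ to the DCB system $D\tilde{\mathcal{M}}$, and let $\theta\in C([-\tau,0];\mathbb{R}^n_{>0})$. Then the set $\mathcal H_\theta$ contains exactly one positive equilibrium of $D\mathcal{M}$; namely $x^*=Q\tilde x^*$, where $\tilde x^*$ is the unique positive equilibrium of $D\tilde{\mathcal{M}}$ in its stoichiometric compatibility class containing $Q^{-1}\theta$.
   Context: For $x,y\in\mathbb{R}^n$ with $x\ge 0$, write $x^{y}=\prod_{j=1}^n x_j^{y_j}$. A delayed mass-action system on species $X_1,\dots,X_n$ consists of reactions $R_i: y_{\cdot i}\to y'_{\cdot i}$, $i=1,\dots,r$, with complexes $y_{\cdot i},y'_{\cdot i}\in\mathbb{R}^n_{\ge0}$, rate constants $\kappa_i>0$ and delays $\tau_i\ge0$; with $\tau\ge\max_i\tau_i$, its dynamics is the delay differential equation $\dot x(t)=F(x_t):=\sum_{i=1}^r\kappa_i\big[x(t-\tau_i)^{y_{\cdot i}}y'_{\cdot i}-x(t)^{y_{\cdot i}}y_{\cdot i}\big]$, $t\ge 0$, where $x_t(s)=x(t+s)$, $s\in[-\tau,0]$, with initial function $\theta\in C([-\tau,0];\mathbb{R}^n_{\ge0})$. Its stoichiometric subspace is $\mathscr S=\mathrm{span}\{y'_{\cdot i}-y_{\cdot i}\}$. A positive equilibrium is $x^*\in\mathbb{R}^n_{>0}$ with $\sum_i\kappa_i (x^* )^{y_{\cdot i}}(y'_{\cdot i}-y_{\cdot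 i})=0$ (viewed as a constant function). The stoichiometric compatibility class containing $\theta$ is $\mathcal P_\theta=\{\psi\in C([-\tau,0];\mathbb{R}^n_{\ge0}): c_a(\psi)=c_a(\theta)\ \forall a\in\mathscr S^\perp\}$, where $c_a(\psi)=a^\top\big[\psi(0)+\sum_{i=1}^r\big(\kappa_i\int_{-\tau_i}^0\psi(s)^{y_{\cdot i}}ds\big)y_{\cdot i}\big]$. A vector $\bar x\in\mathbb{R}^n_{>0}$ is a complex balanced equilibrium if for every complex $\eta$ of the network $\sum_{i: y_{\cdot i}=\eta}\kappa_i\bar x^{y_{\cdot i}}=\sum_{i: y'_{\cdot i}=\eta}\kappa_i\bar x^{y_{\cdot i}}$. A delayed complex balanced (DCB) system is a delayed mass-action system admitting a positive complex balanced equilibrium; each stoichiometric compatibility class $\mathcal P_\theta$ of a DCB system with $\theta$ positive contains exactly one positive equilibrium. Two delayed mass-action systems $D\mathcal{M}$ (right-hand side $F$) and $D\tilde{\mathcal{M}}$ (right-hand side $\tilde F$) on the same species are linearly conjugate via a positive diagonal matrix $Q$ if $F(Q\psi)=Q\tilde F(\psi)$ for all $\psi\in C([-\tau,0];\mathbb{R}^n_{>0})$. An $\ell c$DCB system is one linearly conjugate via some positive diagonal matrix to a DCB system. If $D\tilde{\mathcal{M}}$ has reactions $y_{\cdot i}\to\tilde y'_{\cdot i}$, rate constants $\tilde\kappa_i$, delays $\tau_i$ ($i=1,\dots,\tilde r$) and stoichiometric subspace $\tilde{\mathscr S}$, define $h_a(\psi)=a^\top\big[\psi(0)+\sum_{i=1}^{\tilde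 r}\big(\tilde\kappa_i\prod_{j=1}^n q_j^{-y_{ji}}\int_{-\tau_i}^0\psi(s)^{y_{\cdot i}}ds\big)Qy_{\cdot i}\big]$ and $\mathcal H_\theta=\{\psi\in C([-\tau,0];\mathbb{R}^n_{\ge0}): h_a(\psi)=h_a(\theta)\ \forall a\in(Q^{-1})^\top\tilde{\mathscr S}^\perp\}$. *)

(* Defs.v *)
From Stdlib Require Import Reals Lra ClassicalEpsilon.
From Coquelicot Require Import Coquelicot.
Open Scope R_scope.

(* Vectors in R^n are functions nat -> R, only indices j < n are meaningful. *)
Fixpoint fsum (n : nat) (f : nat -> R) : R :=
  match n with O => 0 | S k => fsum k f + f k end.
Fixpoint fprod (n : nat) (f : nat -> R) : R :=
  match n with O => 1 | S k => fprod k f * f k end.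

Definition dot (n : nat) (a v : nat -> R) : R := fsum n (fun j => a j * v j).
Definition veq (n : nat) (u v : nat -> R) : Prop := forall j, (j < n)%nat -> u j = v j.

(* real power x^a for x >= 0, with 0^0 = 1 and 0^a = 0 for a <> 0 *)
Definition rpow (x a : R) : R :=
  if Req_EM_T x 0 then (if Req_EM_T a 0 then 1 else 0) else Rpower x a.

Definition mono (n : nat) (x y : nat -> R) : R := fprod n (fun j => rpow (x j) (y j)).

(* A delayed mass-action system: reactions i < nr,
   ysrc i = y_{.i} (reactant complex), yprod i = y'_{.i} (product complex),
   rate constants kap i, delays dly i. *)
Record dmas := DMAS {
  nr : nat;
  ysrc : nat -> nat -> R;
  yprod : nat -> nat -> R;
  kap : nat -> R;
  dly : nat -> R }.

Definition wf_dmas (n : nat) (M : dmas) : Prop :=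
  forall i, (i < nr M)%nat ->
    0 < kap M i /\ 0 <= dly M i /\
    (forall j, (j < n)%nat -> 0 <= ysrc M i j /\ 0 <= yprod M i j).

Definition delay_bound (M : dmas) (tau : R) : Prop :=
  forall i, (i < nr M)%nat -> dly M i <= tau.

(* Initial functions: psi : R -> R^n, considered on [-tau, 0] *)
Definition in_I (tau s : R) : Prop := - tau <= s <= 0.

Definition cont_on (n : nat) (tau : R) (psi : R -> nat -> R) : Prop :=
  forall j, (j < n)%nat -> forall s, in_I tau s -> forall eps, 0 < eps ->
    exists delta, 0 < delta /\ forall s', in_I tau s' -> Rabs (s' - s) < delta ->
      Rabs (psi s' j - psi s j) < eps.

Definition Cnn (n : nat) (tau : R) (psi : R -> nat -> R) : Prop :=
  cont_on n tau psi /\ forall s, in_I tau s -> forall j, (j < n)%nat -> 0 <= psi s j.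
Definition Cpos (n : nat) (tau : R) (psi : R -> nat -> R) : Prop :=
  cont_on n tau psi /\ forall s, in_I tau s -> forall j, (j < n)%nat -> 0 < psi s j.

Definition Frhs (n : nat) (M : dmas) (psi : R -> nat -> R) : nat -> R :=
  fun j => fsum (nr M) (fun i => kap M i *
     (mono n (psi (- dly M i)) (ysrc M i) * yprod M i j
      - mono n (psi 0) (ysrc M i) * ysrc M i j)).

Definition in_S (n : nat) (M : dmas) (v : nat -> R) : Prop :=
  exists c : nat -> R, forall j, (j < n)%nat ->
    v j = fsum (nr M) (fun i => c i * (yprod M i j - ysrc M i j)).
Definition in_Sperp (n : nat) (M : dmas) (a : nat -> R) : Prop :=
  forall v, in_S n M v -> dot n a v = 0.

Definition constf (x : nat -> R) : R -> nat -> R := fun _ => x.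

Definition is_pos_eq (n : nat) (M : dmas) (x : nat -> R) : Prop :=
  (forall j, (j < n)%nat -> 0 < x j) /\
  forall j, (j < n)%nat ->
    fsum (nr M) (fun i => kap M i * mono n x (ysrc M i) * (yprod M i j - ysrc M i j)) = 0.

Definition c_a (n : nat) (M : dmas) (a : nat -> R) (psi : R -> nat -> R) : R :=
  dot n a (fun j => psi 0 j + fsum (nr M) (fun i =>
     kap M i * RInt (fun s => mono n (psi s) (ysrc M i)) (- dly M i) 0 * ysrc M i j)).

Definition Pclass (n : nat) (M : dmas) (tau : R) (theta psi : R -> nat -> R) : Prop :=
  Cnn n tau psi /\ forall a, in_Sperp n M a -> c_a n M a psi = c_a n M a theta.

Definition veq_dec (n : nat) (u v : nat -> R) : bool :=
  if excluded_middle_informative (veq n u v) then true else false.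

Definition is_complex (n : nat) (M : dmas) (eta : nat -> R) : Prop :=
  (exists i, (i < nr M)%nat /\ veq n eta (ysrc M i)) \/
  (exists i, (i < nr M)%nat /\ veq n eta (yprod M i)).

Definition complex_balanced (n : nat) (M : dmas) (x : nat -> R) : Prop :=
  (forall j, (j < n)%nat -> 0 < x j) /\
  forall eta, is_complex n M eta ->
    fsum (nr M) (fun i => if veq_dec n eta (ysrc M i) then kap M i * mono n x (ysrc M i) else 0)
    = fsum (nr M) (fun i => if veq_dec n eta (yprod M i) then kap M i * mono n x (ysrc M i) else 0).

Definition DCB (n : nat) (M : dmas) : Prop :=
  wf_dmas n M /\ exists x, complex_balanced n M x.

(* Q = diag(q), acting on vectors and functions *)
Definition Qv (q x : nat -> R) : nat -> R := fun j => q j * x j.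
Definition Qf (q : nat -> R) (psi : R -> nat -> R) : R -> nat -> R := fun s => Qv q (psi s).
Definition Qinvf (q : nat -> R) (psi : R -> nat -> R) : R -> nat -> R :=
  fun s j => psi s j / q j.

Definition lin_conj (n : nat) (tau : R) (M Mt : dmas) (q : nat -> R) : Prop :=
  (forall j, (j < n)%nat -> 0 < q j) /\
  forall psi, Cpos n tau psi -> forall j, (j < n)%nat ->
    Frhs n M (Qf q psi) j = q j * Frhs n Mt psi j.

Definition h_a (n : nat) (Mt : dmas) (q : nat -> R) (a : nat -> R) (psi : R -> nat -> R) : R :=
  dot n a (fun j => psi 0 j + fsum (nr Mt) (fun i =>
     kap Mt i * fprod n (fun k => rpow (q k) (- ysrc Mt i k))
     * RInt (fun s => mono n (psi s) (ysrc Mt i)) (- dly Mt i) 0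
     * (q j * ysrc Mt i j))).

(* H_theta: a ranges over (Q^{-1})^T S~^perp = { Q^{-1} b | b in S~^perp } *)
Definition Hclass (n : nat) (Mt : dmas) (tau : R) (q : nat -> R) (theta psi : R -> nat -> R) : Prop :=
  Cnn n tau psi /\
  forall a, (exists b, in_Sperp n Mt b /\ forall j, (j < n)%nat -> a j = b j / q j) ->
    h_a n Mt q a psi = h_a n Mt q a theta.

(* Main.v *)
Require Import Defs.
From Stdlib Require Import Reals Lra Lia.
From Coquelicot Require Import Coquelicot.
Open Scope R_scope.

Lemma fsum_ext n f g : (forall i, (i < n)%nat -> f i = g i) -> fsum n f = fsum n g.
Proof. induction n; simpl; intros H; auto. rewrite IHn by (intros; apply H; lia). rewrite H by lia; auto. Qed.
Lemma fprod_ext n f g : (forall i, (i < n)%nat -> f i = g i) -> fprod n f = fprod n g.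
Proof. induction n; simpl; intros H; auto. rewrite IHn by (intros; apply H; lia). rewrite H by lia; auto. Qed.
Lemma fsum_scal n c f : c * fsum n f = fsum n (fun i => c * f i).
Proof. induction n; simpl. ring. rewrite <- IHn; ring. Qed.

Lemma mono_ext n x x' y : veq n x x' -> mono n x y = mono n x' y.
Proof. intros H; unfold mono; apply fprod_ext; intros; rewrite H; auto. Qed.

Lemma rpow_div x q a : 0 <= x -> 0 < q -> rpow (x / q) a = rpow q (- a) * rpow x a.
Proof.
  intros Hx Hq. unfold rpow.
  destruct (Req_EM_T q 0) as [e|_]; [lra|].
  destruct (Req_EM_T x 0) as [e|ne].
  - subst. rewrite Rdiv_0_l. destruct (Req_EM_T 0 0) as [_|c]; [|lra].
    destruct (Req_EM_T a 0) as [ea|na].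
    + subst. rewrite Ropp_0, Rpower_O; lra.
    + ring.
  - destruct (Req_EM_T (x / q) 0) as [e|_].
    + exfalso. apply ne. assert (x = x / q * q) by (field; lra). rewrite H, e; ring.
    + unfold Rpower. rewrite <- exp_plus. f_equal. rewrite ln_div by lra. ring.
Qed.

Lemma mono_div n x q y : (forall j, (j < n)%nat -> 0 <= x j) -> (forall j, (j < n)%nat -> 0 < q j) ->
  mono n (fun j => x j / q j) y = fprod n (fun k => rpow (q k) (- y k)) * mono n x y.
Proof.
  unfold mono. induction n; simpl; intros Hx Hq. ring.
  rewrite IHn by (intros; (apply Hx || apply Hq); lia).
  rewrite rpow_div by (apply Hx || apply Hq; lia). ring.
Qed.
Definition clamp (tau s : R) := Rmax (- tau) (Rmin s 0).

Lemma clamp_in tau s : 0 <= tau -> in_I tau (clamp tau s).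
Proof. intros; unfold clamp, in_I, Rmax, Rmin; repeat destruct Rle_dec; lra. Qed.
Lemma clamp_id tau s : in_I tau s -> clamp tau s = s.
Proof. unfold in_I, clamp, Rmax, Rmin; intros; repeat destruct Rle_dec; lra. Qed.
Lemma clamp_lip tau s s' : 0 <= tau -> Rabs (clamp tau s' - clamp tau s) <= Rabs (s' - s).
Proof. intros; unfold clamp, Rmax, Rmin; repeat destruct Rle_dec; unfold Rabs; repeat destruct Rcase_abs; lra. Qed.

Lemma cont_clamp n tau psi j s : 0 <= tau -> cont_on n tau psi -> (j < n)%nat ->
  continuity_pt (fun s => psi (clamp tau s) j) s.
Proof.
  intros Ht Hc Hj. unfold continuity_pt, continue_in, limit1_in, limit_in. intros eps Heps.
  destruct (Hc j Hj (clamp tau s) (clamp_in tau s Ht) eps Heps) as [d [Hd H]].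
  exists d; split; auto. intros x [_ Hx]. simpl in *. unfold R_dist in *.
  apply H. apply clamp_in; auto. eapply Rle_lt_trans; [apply clamp_lip|]; auto.
Qed.

Lemma cont_fprod n (g : R -> nat -> R) x : (forall j, (j < n)%nat -> continuity_pt (fun s => g s j) x) ->
  continuity_pt (fun s => fprod n (g s)) x.
Proof.
  induction n; simpl; intros H.
  - apply continuity_pt_const; intros a b; auto.
  - apply (continuity_pt_mult (fun s => fprod n (g s)) (fun s => g s n)).
    apply IHn; intros; apply H; lia. apply H; lia.
Qed.

Lemma cont_rpow (f : R -> R) a x : (forall s, 0 < f s) -> continuity_pt f x ->
  continuity_pt (fun s => rpow (f s) a) x.
Proof.
  intros Hp Hc.
  apply continuity_pt_ext with (f := fun s => exp (a * ln (f s))).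
  { intros s. unfold rpow. destruct Req_EM_T as [e|_]. specialize (Hp s); lra. reflexivity. }
  apply (continuity_pt_comp (fun s => a * ln (f s)) exp).
  - apply (continuity_pt_mult (fun _ => a) (fun s => ln (f s))).
    apply continuity_pt_const; intros u v; auto.
    apply (continuity_pt_comp f ln). auto.
    apply derivable_continuous_pt. exists (/ f x). apply derivable_pt_lim_ln. auto.
  - apply derivable_continuous_pt. apply derivable_pt_exp.
Qed.

Lemma exRInt_mono n tau psi y d : Cpos n tau psi -> 0 <= d <= tau ->
  ex_RInt (fun s => mono n (psi s) y) (- d) 0.
Proof.
  intros [Hc Hp] Hd.
  apply ex_RInt_ext with (f := fun s => mono n (psi (clamp tau s)) y).
  { intros x. rewrite Rmin_left, Rmax_right by lra. intros Hx. rewrite clamp_id; auto.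
    unfold in_I; lra. }
  apply (@ex_RInt_continuous R_CompleteNormedModule). intros z _.
  apply (proj1 (continuity_pt_filterlim _ _)).
  unfold mono. apply (cont_fprod n (fun s j => rpow (psi (clamp tau s) j) (y j))).
  intros j Hj. apply (cont_rpow (fun s => psi (clamp tau s) j)).
  intros s; apply (Hp _ (clamp_in tau s ltac:(lra)) j Hj).
  apply (cont_clamp n); auto; lra.
Qed.

Lemma h_c n Mt q a b psi tau : wf_dmas n Mt -> delay_bound Mt tau ->
  (forall j, (j < n)%nat -> 0 < q j) -> (forall j, (j < n)%nat -> a j = b j / q j) ->
  (forall s, in_I tau s -> forall j, (j < n)%nat -> 0 <= psi s j) ->
  (forall i, (i < nr Mt)%nat -> ex_RInt (fun s => mono n (psi s) (ysrc Mt i)) (- dly Mt i) 0) ->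
  h_a n Mt q a psi = c_a n Mt b (Qinvf q psi).
Proof.
  intros Hw Hd Hq Ha Hp Hi. unfold h_a, c_a, dot. apply fsum_ext; intros j Hj.
  assert (E : fsum (nr Mt) (fun i => kap Mt i * fprod n (fun k => rpow (q k) (- ysrc Mt i k))
     * RInt (fun s => mono n (psi s) (ysrc Mt i)) (- dly Mt i) 0 * (q j * ysrc Mt i j))
    = q j * fsum (nr Mt) (fun i => kap Mt i *
        RInt (fun s => mono n (Qinvf q psi s) (ysrc Mt i)) (- dly Mt i) 0 * ysrc Mt i j)).
  { rewrite fsum_scal. apply fsum_ext; intros i Hi'.
    destruct (Hw i Hi') as [_ [Hdl _]]. specialize (Hd i Hi').
    assert (R1 : RInt (fun s => mono n (Qinvf q psi s) (ysrc Mt i)) (- dly Mt i) 0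
      = RInt (fun s => scal (fprod n (fun k => rpow (q k) (- ysrc Mt i k))) (mono n (psi s) (ysrc Mt i))) (- dly Mt i) 0).
    { apply RInt_ext. intros x. rewrite Rmin_left, Rmax_right by lra. intros Hx.
      unfold Qinvf. rewrite mono_div; auto. intros k Hk. apply Hp; auto. unfold in_I; lra. }
    rewrite R1, (@RInt_scal R_CompleteNormedModule) by auto. change (scal ?u ?v) with (u * v). ring. }
  rewrite E, Ha by auto. change (Qinvf q psi 0 j) with (psi 0 j / q j). specialize (Hq j Hj). set (S := fsum _ _). field. lra.
Qed.

Lemma c_a_ext n M a psi phi : (forall s, veq n (psi s) (phi s)) -> c_a n M a psi = c_a n M a phi.
Proof.
  intros H. unfold c_a, dot. apply fsum_ext; intros j Hj. rewrite (H 0 j Hj). f_equal. f_equal.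
  apply fsum_ext; intros i Hi. f_equal. f_equal. apply RInt_ext; intros. apply mono_ext; auto.
Qed.

Lemma Frhs_const n M x j : Frhs n M (constf x) j =
  fsum (nr M) (fun i => kap M i * mono n x (ysrc M i) * (yprod M i j - ysrc M i j)).
Proof. unfold Frhs, constf. apply fsum_ext; intros; ring. Qed.

Lemma Cpos_const n tau x : (forall j, (j < n)%nat -> 0 < x j) -> Cpos n tau (constf x).
Proof.
  intros H; split.
  - intros j Hj s _ eps Heps. exists 1; split; [lra|]. intros. unfold constf.
    rewrite Rminus_diag, Rabs_R0; auto.
  - intros; apply H; auto.
Qed.

Lemma Cpos_Cnn n tau x : Cpos n tau x -> Cnn n tau x.
Proof. intros [H1 H2]; split; auto. intros; apply Rlt_le; auto. Qed.

Lemma Cpos_Qinv n tau q theta : (forall j, (j < n)%nat -> 0 < q j) -> Cpos n tau theta -> Cpos n tau (Qinvf q theta).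
Proof.
  intros Hq [Hc Hp]; split.
  - intros j Hj s Hs eps Heps. specialize (Hq j Hj).
    destruct (Hc j Hj s Hs (eps * q j)) as [d [Hd H]]. apply Rmult_lt_0_compat; auto.
    exists d; split; auto. intros s' Hs' Hd'. unfold Qinvf.
    replace (theta s' j / q j - theta s j / q j) with ((theta s' j - theta s j) / q j) by (field; lra).
    unfold Rdiv. rewrite Rabs_mult, Rabs_inv, (Rabs_right (q j)) by lra.
    apply (Rmult_lt_reg_r (q j)); auto. rewrite Rmult_assoc, Rinv_l by lra. rewrite Rmult_1_r. apply H; auto.
  - intros s Hs j Hj. unfold Qinvf. apply Rdiv_lt_0_compat; auto.
Qed.

Theorem mainTheorem4 (n : nat) (tau : R) (M Mt : dmas) (q : nat -> R)
  (theta : R -> nat -> R)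
  (hM : wf_dmas n M) (hMt : DCB n Mt)
  (htauM : delay_bound M tau) (htauMt : delay_bound Mt tau)
  (hconj : lin_conj n tau M Mt q)
  (* cited result: each compatibility class of a DCB system with positive
     initial function contains exactly one positive equilibrium *)
  (hDCBuniq : forall phi, Cpos n tau phi ->
     exists xt, is_pos_eq n Mt xt /\ Pclass n Mt tau phi (constf xt) /\
       forall xt', is_pos_eq n Mt xt' -> Pclass n Mt tau phi (constf xt') -> veq n xt' xt)
  (htheta : Cpos n tau theta) :
  exists xt,
    is_pos_eq n Mt xt /\ Pclass n Mt tau (Qinvf q theta) (constf xt) /\
    (forall xt', is_pos_eq n Mt xt' -> Pclass n Mt tau (Qinvf q theta) (constf xt') ->
       veq n xt' xt) /\
    is_pos_eq n M (Qv q xt) /\ Hclass n Mt tau q theta (constf (Qv q xt)) /\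
    (forall x, is_pos_eq n M x -> Hclass n Mt tau q theta (constf x) -> veq n x (Qv q xt)).
Proof.
  destruct hconj as [Hq Hcj]. destruct hMt as [HwMt _].
  assert (Hphi := Cpos_Qinv n tau q theta Hq htheta).
  destruct (hDCBuniq _ Hphi) as [xt [Hxt [HP Huniq]]].
  assert (Hth_int : forall i, (i < nr Mt)%nat -> ex_RInt (fun s => mono n (theta s) (ysrc Mt i)) (- dly Mt i) 0).
  { intros i Hi. apply (exRInt_mono n tau); auto. destruct (HwMt i Hi) as [_ [H _]]. split; auto. }
  assert (Hconst_int : forall x i, ex_RInt (fun s => mono n (constf x s) (ysrc Mt i)) (- dly Mt i) 0).
  { intros x i. unfold constf. apply (ex_RInt_const (V := R_NormedModule)). }
  assert (Hth_h : forall a b, (forall j, (j < n)%nat -> a j = b j / q j) ->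
     h_a n Mt q a theta = c_a n Mt b (Qinvf q theta)).
  { intros a b Hab. apply (h_c n Mt q a b theta tau); auto.
    intros s Hs j Hj. apply Rlt_le. apply (proj2 htheta); auto. }
  assert (Hc_h : forall x a b, (forall j, (j < n)%nat -> 0 < x j) -> (forall j, (j < n)%nat -> a j = b j / q j) ->
     h_a n Mt q a (constf x) = c_a n Mt b (Qinvf q (constf x))).
  { intros x a b Hx Hab. apply (h_c n Mt q a b (constf x) tau); auto.
    intros s Hs j Hj. apply Rlt_le; auto. }
  assert (HQxt : forall j, (j < n)%nat -> 0 < Qv q xt j).
  { intros j Hj. unfold Qv. apply Rmult_lt_0_compat; auto. apply (proj1 Hxt); auto. }
  exists xt. split; [auto|]. split; [auto|]. split; [auto|]. split; [|split].
  - split; auto. intros j Hj. rewrite <- Frhs_const.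
    change (constf (Qv q xt)) with (Qf q (constf xt)).
    rewrite Hcj; auto. rewrite Frhs_const, (proj2 Hxt j Hj). ring.
    apply Cpos_const. apply (proj1 Hxt).
  - split. apply Cpos_Cnn, Cpos_const; auto.
    intros a [b [Hb Hab]]. rewrite Hth_h with (b := b), Hc_h with (b := b); auto.
    rewrite (c_a_ext n Mt b _ (constf xt)). apply (proj2 HP); auto.
    intros s j Hj. unfold Qinvf, constf, Qv. field. specialize (Hq j Hj); lra.
  - intros x Hx [HxC HxH].
    set (xt' := fun j => x j / q j).
    assert (Hxt'p : forall j, (j < n)%nat -> 0 < xt' j).
    { intros j Hj. unfold xt'. apply Rdiv_lt_0_compat; auto. apply (proj1 Hx); auto. }
    assert (Hv : veq n xt' xt).
    { apply Huniq.
      - split; auto. intros j Hj.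
        assert (E := Hcj (constf xt') (Cpos_const n tau xt' Hxt'p) j Hj).
        change (Qf q (constf xt')) with (constf (Qv q xt')) in E.
        rewrite Frhs_const in E.
        rewrite (fsum_ext _ _ (fun i => kap M i * mono n x (ysrc M i) * (yprod M i j - ysrc M i j))) in E.
        2:{ intros i Hi. rewrite (mono_ext n (Qv q xt') x); auto.
            intros k Hk. unfold Qv, xt'. field. specialize (Hq k Hk); lra. }
        rewrite (proj2 Hx j Hj), Frhs_const in E.
        specialize (Hq j Hj). symmetry in E. destruct (Rmult_integral _ _ E); auto; lra.
      - split. apply Cpos_Cnn, Cpos_const; auto.
        intros b Hb.
        change (constf xt') with (Qinvf q (constf x)).
        rewrite <- (Hc_h x (fun j => b j / q j) b); auto. 2: apply (proj1 Hx).
        rewrite HxH. apply Hth_h; auto.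
        exists b; split; auto. }
    intros j Hj. unfold Qv. rewrite <- (Hv j Hj). unfold xt'. specialize (Hq j Hj). field. lra.
Qed.
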